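(* Let $\tau$ be a full binary tree with survivals with parameters $p_0,p_1,p_2,q_0,q_1,q_2$, rooted at a type 1 vertex, such that $\mathbb P(\Vert\tau\Vert<\infty)=1$. Let $D_1$ and $D_2$ be the numbers of type 1 (left) and type 2 (right) fathers in $\tau$, the root counted as a left father when it has two children. Set $$P=\frac{p_0}{p_0+p_2},\qquad Q=\frac{q_0}{q_0+q_2}.$$ Then for all integers $n\geq1$ and $m\geq 0$, $$\mathbb P(D_1=n,\,D_2=m)=N(n+m,m+1)\,P^{m+1}(1-P)^{n}\,Q^{n}(1-Q)^{m},$$ i.e. the likelihood of $(P,Q)$ given $n$ left fathers and $m$ right fathers is $\mathscr L(P,Q\mid n,m)=N(n+m,m+1)P^{m+1}(1-P)^nQ^n(1-Q)^m$.
   Context: A full binary tree with survivals is a two-type Galton–Watson tree (types $1,2$; each vertex of type $j$ independently has $\alpha_1$ children of type 1 and $\alpha_2$ children of type 2 with probability $\mu^{(j)}(\alpha_1,\alpha_2)$, children ordered by type, so that of two siblings the left one has type 1 and the right one type 2) with offspring distribution $\mu^{(1)}(0,0)=p_0$, $\mu^{(1)}(1,0)=p_1$, $\mu^{(1)}(1,1)=p_2$, $\mu^{(2)}(0,0)=q_0$, $\mu^{(2)}(0,1)=q_1$, $\mu^{(2)}(1,1)=q_2$, where $p_0,p_1,p_2,q_0,q_1,q_2\in(0,1)$ and $p_0+p_1+p_2=q_0+q_1+q_2=1$. A father is a vertex with two children. $\Vert\tau\Vert$ is the number of edges of $\tau$. Narayana numbers: $N(n,k)=\frac1n\binom nk\binom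 n{k-1}$ for $n\geq1$, $1\le k\le n$. *)

(* Defs.v *)
From Stdlib Require Import Reals List Arith.
Import ListNotations.
Open Scope R_scope.

(* A vertex has 0 children (Leaf), 1 child (Unary; the child has the same
   type as its parent, since mu^(1)(1,0) and mu^(2)(0,1) are the only
   one-child configurations), or 2 children (Binary l r; l has type 1,
   r has type 2).  Types are thus determined by the root type. *)
Inductive tree : Type :=
| Leaf : tree
| Unary : tree -> tree
| Binary : tree -> tree -> tree.

Fixpoint edges (t : tree) : nat :=
  match t with
  | Leaf => 0
  | Unary u => S (edges u)
  | Binary l r => S (S (edges l + edges r))
  end.

(* Probability that the Galton-Watson tree rooted at a vertex of type
   [ty] (true = type 1, false = type 2) equals the finite tree [t]. *)
Fixpoint gw_weight (p0 p1 p2 q0 q1 q2 : R) (ty : bool) (t : tree) : R :=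
  match t with
  | Leaf => if ty then p0 else q0
  | Unary u => (if ty then p1 else q1) * gw_weight p0 p1 p2 q0 q1 q2 ty u
  | Binary l r => (if ty then p2 else q2)
                  * gw_weight p0 p1 p2 q0 q1 q2 true l
                  * gw_weight p0 p1 p2 q0 q1 q2 false r
  end.

(* Number of fathers (vertices with two children) of type 1 (when
   [which] = true) resp. type 2 (when [which] = false), in the tree [t]
   whose root has type [ty]. *)
Fixpoint fathers (which : bool) (ty : bool) (t : tree) : nat :=
  match t with
  | Leaf => 0
  | Unary u => fathers which ty u
  | Binary l r =>
      (if Bool.eqb which ty then 1 else 0)%nat
      + fathers which true l + fathers which false r
  end.

(* Enumeration (with fuel) of all trees with exactly k edges. *)
Fixpoint gen (fuel k : nat) : list tree :=
  match fuel with
  | O => match k with O => [Leaf] | _ => [] end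
  | S f =>
      match k with
      | O => [Leaf]
      | S O => map Unary (gen f O)
      | S (S j as k') =>
          map Unary (gen f k')
          ++ flat_map (fun i => flat_map (fun l => map (Binary l) (gen f (j - i)))
                                           (gen f i))
                      (seq 0 (S j))
      end
  end.

Definition trees_of_size (k : nat) : list tree := gen k k.

Definition sumR (l : list R) : R := fold_right Rplus 0 l.

Definition mass_size (p0 p1 p2 q0 q1 q2 : R) (pred : tree -> bool) (k : nat) : R :=
  sumR (map (gw_weight p0 p1 p2 q0 q1 q2 true) (filter pred (trees_of_size k))).

Definition narayana (n k : nat) : R := / INR n * C n k * C n (k - 1).

(* Main.v *)
Require Import Defs.
From Stdlib Require Import Reals List Arith Lia Lra.
Import ListNotations.
Open Scope R_scope.

Definition Gc (i j n m : nat) : R :=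
  if orb (Nat.eqb (n+m+i) 0) (Nat.eqb (n+m+j) 0) then 1
  else INR (i*j+i*n+j*m) / (INR (n+m+i) * INR (n+m+j)) * C (n+m+i) n * C (n+m+j) m.

Lemma Gc_sym i j n m : Gc i j n m = Gc j i m n.
Proof.
  unfold Gc.
  replace (m+n+j)%nat with (n+m+j)%nat by lia.
  replace (m+n+i)%nat with (n+m+i)%nat by lia.
  replace (j*i+j*m+i*n)%nat with (i*j+i*n+j*m)%nat by lia.
  rewrite Bool.orb_comm.
  destruct (_ || _)%bool; [reflexivity|].
  rewrite (Rmult_comm (INR (n+m+j))). ring.
Qed.

Lemma fact_S_INR k : INR (fact (S k)) = INR (S k) * INR (fact k).
Proof. simpl fact. rewrite plus_INR, mult_INR, S_INR. ring. Qed.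

Lemma fact_pos_INR k : INR (fact k) <> 0.
Proof. apply not_0_INR. apply fact_neq_0. Qed.

Lemma Gc_rec1 i j n m : Gc (S i) j n m =
  Gc i j n m + match n with O => 0 | S n' => Gc (S i) (S j) n' m end.
Proof.
  destruct n as [|n'].
  - unfold Gc. simpl Nat.add.
    destruct (Nat.eqb_spec (m+j) 0) as [E|E].
    + rewrite !Bool.orb_true_r. ring.
    + rewrite !Bool.orb_false_r.
      replace (m + S i)%nat with (S (m+i)) by lia. simpl Nat.eqb.
      destruct (Nat.eqb_spec (m+i) 0) as [E2|E2].
      * assert (m = 0)%nat by lia. assert (i = 0)%nat by lia. subst. simpl.
        replace (j + 0 + 0 + j * 0)%nat with j by lia.
        unfold C. rewrite !Nat.sub_0_r. simpl (fact 0). simpl (fact 1). simpl (INR 1).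
        assert (INR j <> 0) by (apply not_0_INR; lia).
        field. split; [apply fact_pos_INR| assumption].
      * unfold C. rewrite !Nat.sub_0_r, !Nat.mul_0_r, !Nat.add_0_r.
        replace (m + j - m)%nat with j by lia.
        simpl (fact 0).
        assert (INR (m+i) <> 0) by (apply not_0_INR; lia).
        assert (INR (m+j) <> 0) by (apply not_0_INR; lia).
        pose proof (fact_pos_INR (m+i)). pose proof (fact_pos_INR (S (m+i))).
        pose proof (fact_pos_INR m). pose proof (fact_pos_INR j).
        pose proof (pos_INR (m+i)).
        rewrite ?plus_INR, ?mult_INR in *. simpl (INR 0). rewrite ?S_INR, ?plus_INR.
        field. repeat split; try assumption. all: pose proof (pos_INR m); pose proof (pos_INR i); rewrite ?INR_0; lra.
  - unfold Gc.
    replace (S n' + m + S i)%nat with (S (S (n'+m+i))) by lia.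
    replace (S n' + m + i)%nat with (S (n'+m+i)) by lia.
    replace (n' + m + S i)%nat with (S (n'+m+i)) by lia.
    replace (S n' + m + j)%nat with (S (n'+m+j)) by lia.
    replace (n' + m + S j)%nat with (S (n'+m+j)) by lia.
    simpl Nat.eqb. simpl orb.
    unfold C.
    replace (S (S (n'+m+i)) - S n')%nat with (S (m+i)) by lia.
    replace (S (n'+m+i) - S n')%nat with (m+i)%nat by lia.
    replace (S (n'+m+i) - n')%nat with (S (m+i)) by lia.
    replace (S (n'+m+j) - m)%nat with (S (n'+j)) by lia.
    rewrite (fact_S_INR (S (n'+m+i))), (fact_S_INR (n'+m+i)), (fact_S_INR n'), (fact_S_INR (m+i)).
    repeat rewrite ?mult_INR, ?plus_INR, ?S_INR.
    assert (INR (fact (n'+m+i)) <> 0) by apply fact_pos_INR.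
    assert (INR (fact n') <> 0) by apply fact_pos_INR.
    assert (INR (fact (m+i)) <> 0) by apply fact_pos_INR.
    assert (INR (fact (S (n'+m+j))) <> 0) by apply fact_pos_INR.
    assert (INR (fact m) <> 0) by apply fact_pos_INR.
    assert (INR (fact (S (n'+j))) <> 0) by apply fact_pos_INR.
    pose proof (pos_INR n'). pose proof (pos_INR m). pose proof (pos_INR i). pose proof (pos_INR j).
    field. repeat split; try assumption; lra.
Qed.

Lemma Gc_rec2 i j n m : Gc i (S j) n m =
  Gc i j n m + match m with O => 0 | S m' => Gc (S i) (S j) n m' end.
Proof.
  rewrite (Gc_sym i (S j)), Gc_rec1, (Gc_sym j i). destruct m; [ring|].
  rewrite (Gc_sym (S j)). reflexivity.
Qed.

Lemma Gc00 n m : Gc 0 0 n m = if Nat.eqb (n+m) 0 then 1 else 0.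
Proof.
  unfold Gc. rewrite !Nat.add_0_r. destruct (Nat.eqb (n+m) 0); simpl; [reflexivity|].
  replace (0*0+0*n+0*m)%nat with 0%nat by lia. simpl (INR 0). unfold Rdiv. ring.
Qed.

Definition Conv (f g : nat -> nat -> R) (n m : nat) : R :=
  sum_f_R0 (fun a => sum_f_R0 (fun b => f a b * g (n-a)%nat (m-b)%nat) m) n.

Lemma sum_zero f N : (forall i, (i <= N)%nat -> f i = 0) -> sum_f_R0 f N = 0.
Proof.
  intros H. induction N; simpl. apply H; lia. rewrite IHN by (intros; apply H; lia).
  rewrite H by lia. ring.
Qed.

Lemma sum_first f N : sum_f_R0 f (S N) = f O + sum_f_R0 (fun i => f (S i)) N.
Proof. rewrite decomp_sum by lia. reflexivity. Qed.

Lemma Conv_plus f h g n m : Conv (fun a b => f a b + h a b) g n m = Conv f g n m + Conv h g n m.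
Proof.
  unfold Conv. rewrite <- plus_sum. apply sum_eq. intros. rewrite <- plus_sum.
  apply sum_eq. intros. ring.
Qed.

Lemma Conv_shift1 f g n m :
  Conv (fun a b => match a with O => 0 | S a' => f a' b end) g n m =
  match n with O => 0 | S n' => Conv f g n' m end.
Proof.
  unfold Conv. destruct n as [|n'].
  - simpl. apply sum_zero. intros. ring.
  - rewrite sum_first. rewrite sum_zero by (intros; ring). rewrite Rplus_0_l.
    apply sum_eq. intros. apply sum_eq. intros. reflexivity.
Qed.

Lemma Conv_shift2 f g n m :
  Conv (fun a b => match b with O => 0 | S b' => f a b' end) g n m =
  match m with O => 0 | S m' => Conv f g n m' end.
Proof.
  unfold Conv. destruct m as [|m'].
  - apply sum_zero. intros. simpl. ring.
  - apply sum_eq. intros. rewrite sum_first. rewrite Rmult_0_l, Rplus_0_l.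
    apply sum_eq. intros. reflexivity.
Qed.

Lemma Conv_delta g n m : Conv (Gc 0 0) g n m = g n m.
Proof.
  unfold Conv. destruct n as [|n'].
  - simpl. destruct m as [|m'].
    + simpl. rewrite Gc00. simpl. ring.
    + rewrite sum_first. rewrite Gc00. simpl Nat.eqb. rewrite sum_zero.
      * rewrite ?Nat.sub_0_r. ring.
      * intros. rewrite Gc00. simpl. ring.
  - rewrite sum_first. rewrite (sum_zero _ n').
    + destruct m as [|m'].
      * simpl. rewrite Gc00. simpl. rewrite ?Nat.sub_0_r. ring.
      * rewrite sum_first. rewrite Gc00. simpl Nat.eqb. rewrite sum_zero.
        -- rewrite ?Nat.sub_0_r. ring.
        -- intros. rewrite Gc00. simpl. ring.
    + intros. apply sum_zero. intros. rewrite Gc00. simpl. ring.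
Qed.

Lemma Conv_Gc : forall K i j n m i' j', (2*n+2*m+i+j <= K)%nat ->
  Conv (Gc i j) (Gc i' j') n m = Gc (i+i') (j+j') n m.
Proof.
  induction K; intros i j n m i' j' HK.
  - assert (n = 0 /\ m = 0 /\ i = 0 /\ j = 0)%nat as (->&->&->&->) by lia.
    apply Conv_delta.
  - destruct i as [|i'0].
    + destruct j as [|j0].
      * apply Conv_delta.
      * transitivity (Conv (fun a b => Gc 0 j0 a b + match b with O => 0 | S b' => Gc 1 (S j0) a b' end) (Gc i' j') n m).
        { unfold Conv. apply sum_eq; intros; apply sum_eq; intros. rewrite Gc_rec2. reflexivity. }
        rewrite Conv_plus, Conv_shift2. rewrite IHK by lia.
        simpl (0 + i')%nat. replace (S j0 + j')%nat with (S (j0 + j')) by lia.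
        rewrite Gc_rec2. destruct m as [|m']; [reflexivity|].
        rewrite IHK by lia. reflexivity.
    + transitivity (Conv (fun a b => Gc i'0 j a b + match a with O => 0 | S a' => Gc (S i'0) (S j) a' b end) (Gc i' j') n m).
      { unfold Conv. apply sum_eq; intros; apply sum_eq; intros. rewrite Gc_rec1. reflexivity. }
      rewrite Conv_plus, Conv_shift1. rewrite IHK by lia.
      replace (S i'0 + i')%nat with (S (i'0 + i')) by lia.
      rewrite Gc_rec1. destruct n as [|n']; [reflexivity|].
      rewrite IHK by lia. replace (S j + j')%nat with (S (j + j')) by lia. reflexivity.
Qed.

Lemma gen_0 f : gen f 0 = [Leaf].
Proof. destruct f; reflexivity. Qed.

Lemma flat_map_ext_in {A B} (f g : A -> list B) l :
  (forall x, In x l -> f x = g x) -> flat_map f l = flat_map g l.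
Proof.
  induction l; simpl; intros H; auto. rewrite H by auto. rewrite IHl; auto.
Qed.

Lemma gen_SS f j : gen (S f) (S (S j)) =
  map Unary (gen f (S j)) ++
  flat_map (fun i => flat_map (fun l => map (Binary l) (gen f (j - i))) (gen f i)) (seq 0 (S j)).
Proof. reflexivity. Qed.

Lemma gen_stable : forall f g k, (k <= f)%nat -> (k <= g)%nat -> gen f k = gen g k.
Proof.
  induction f; intros g k Hf Hg.
  - assert (k = 0)%nat by lia. subst. rewrite !gen_0. reflexivity.
  - destruct k as [|[|j]].
    + rewrite !gen_0; reflexivity.
    + destruct g; [lia|]. simpl. rewrite !gen_0. reflexivity.
    + destruct g; [lia|]. rewrite !gen_SS.
      rewrite (IHf g (S j)) by lia. f_equal.
      apply flat_map_ext_in. intros i Hi. apply in_seq in Hi.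
      rewrite (IHf g i) by lia. apply flat_map_ext_in. intros l _.
      rewrite (IHf g (j - i)%nat) by lia. reflexivity.
Qed.

Definition binpart (k : nat) : list tree :=
  match k with
  | O => []
  | S j => flat_map (fun i => flat_map (fun l => map (Binary l) (trees_of_size (j - i)))
                                       (trees_of_size i))
                    (seq 0 (S j))
  end.

Lemma trees_S k : trees_of_size (S k) = map Unary (trees_of_size k) ++ binpart k.
Proof.
  destruct k as [|j].
  - reflexivity.
  - unfold trees_of_size at 1. rewrite gen_SS.
    f_equal.
    unfold binpart. cbv beta iota. apply flat_map_ext_in. intros i Hi. apply in_seq in Hi.
    unfold trees_of_size. rewrite (gen_stable (S j) i i) by lia.
    apply flat_map_ext_in. intros l _.
    rewrite (gen_stable (S j) (j-i) (j-i)) by lia. reflexivity.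
Qed.

Lemma trees_0 : trees_of_size 0 = [Leaf].
Proof. reflexivity. Qed.

Lemma sumR_app l1 l2 : sumR (l1 ++ l2) = sumR l1 + sumR l2.
Proof. induction l1; simpl; [ring|]. rewrite IHl1. ring. Qed.

Lemma sumR_map_ext {A} (f g : A -> R) l : (forall x, In x l -> f x = g x) ->
  sumR (map f l) = sumR (map g l).
Proof. induction l; simpl; intros H; auto. rewrite H by auto. rewrite IHl; auto. Qed.

Lemma sumR_scal {A} (f : A -> R) c l : sumR (map (fun x => c * f x) l) = c * sumR (map f l).
Proof. induction l; simpl; [ring|]. rewrite IHl. ring. Qed.

Lemma sumR_flat_map {A B} (f : B -> R) (g : A -> list B) l :
  sumR (map f (flat_map g l)) = sumR (map (fun x => sumR (map f (g x))) l).
Proof. induction l; simpl; auto. rewrite map_app, sumR_app, IHl. reflexivity. Qed.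

Lemma sumR_sum {A} (f : nat -> A -> R) N l :
  sumR (map (fun x => sum_f_R0 (fun a => f a x) N) l) = sum_f_R0 (fun a => sumR (map (f a) l)) N.
Proof.
  induction l; simpl.
  - symmetry. apply sum_zero. intros; reflexivity.
  - rewrite IHl. rewrite <- plus_sum. reflexivity.
Qed.

Lemma sumR_seq f j : sumR (map f (seq 0 (S j))) = sum_f_R0 f j.
Proof.
  induction j.
  - simpl. ring.
  - rewrite seq_S, map_app, sumR_app. rewrite IHj. simpl. ring.
Qed.

Lemma sumR_filter {A} (f : A -> R) (p : A -> bool) l :
  sumR (map f (filter p l)) = sumR (map (fun t => if p t then f t else 0) l).
Proof. induction l; simpl; auto. destruct (p a); simpl; rewrite IHl; ring. Qed.

Lemma sum_ind x (g : nat -> R) N :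
  sum_f_R0 (fun a => (if Nat.eqb x a then 1 else 0) * g a) N = if Nat.leb x N then g x else 0.
Proof.
  induction N.
  - simpl. destruct (Nat.eqb_spec x 0); destruct (Nat.leb_spec x 0); try lia; subst; ring.
  - simpl. rewrite IHN. destruct (Nat.eqb_spec x (S N)); destruct (Nat.leb_spec x N);
    destruct (Nat.leb_spec x (S N)); try lia; subst; ring.
Qed.

Lemma ind_split x y N :
  (if Nat.eqb (x + y) N then 1 else 0) =
  sum_f_R0 (fun a => (if Nat.eqb x a then 1 else 0) * (if Nat.eqb y (N - a) then 1 else 0)) N.
Proof.
  rewrite sum_ind. destruct (Nat.leb_spec x N); destruct (Nat.eqb_spec (x+y) N);
  destruct (Nat.eqb_spec y (N - x)); try lia; reflexivity.
Qed.

Definition dA (ty : bool) : nat := if ty then 1%nat else 0%nat.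
Definition dB (ty : bool) : nat := if ty then 0%nat else 1%nat.

Definition psi (p0 p1 p2 q0 q1 q2 : R) (ty : bool) (a b : nat) (t : tree) : R :=
  if andb (Nat.eqb (fathers true ty t) a) (Nat.eqb (fathers false ty t) b)
  then gw_weight p0 p1 p2 q0 q1 q2 ty t else 0.

Definition Fs p0 p1 p2 q0 q1 q2 ty n m k :=
  sumR (map (psi p0 p1 p2 q0 q1 q2 ty n m) (trees_of_size k)).

Lemma if_and (c1 c2 : bool) (x : R) :
  (if andb c1 c2 then x else 0) = (if c1 then 1 else 0) * (if c2 then 1 else 0) * x.
Proof. destruct c1, c2; simpl; ring. Qed.

Lemma prod_sums f g N M :
  sum_f_R0 f N * sum_f_R0 g M = sum_f_R0 (fun a => sum_f_R0 (fun b => f a * g b) M) N.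
Proof.
  rewrite Rmult_comm, scal_sum. apply sum_eq. intros. rewrite scal_sum. apply sum_eq.
  intros. ring.
Qed.

Lemma ind_S x n : (if Nat.eqb (S x) n then 1 else 0) =
  (if Nat.leb 1 n then 1 else 0) * (if Nat.eqb x (n - 1) then 1 else 0).
Proof.
  destruct n; simpl; [ring|]. rewrite Nat.sub_0_r. ring.
Qed.

Lemma split_core (d e A A' B B' n m : nat) (c W1 W2 : R) :
  (if andb (Nat.eqb (d + A + A') n) (Nat.eqb (e + B + B') m) then c * W1 * W2 else 0) =
  c * (if andb (Nat.leb d n) (Nat.leb e m) then
    sum_f_R0 (fun a => sum_f_R0 (fun b =>
       (if andb (Nat.eqb A a) (Nat.eqb B b) then W1 else 0) *
       (if andb (Nat.eqb A' (n - d - a)) (Nat.eqb B' (m - e - b)) then W2 else 0)) (m - e)) (n - d)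
   else 0).
Proof.
  rewrite (sum_eq _ (fun a => (if Nat.eqb A a then 1 else 0) *
     ((if Nat.eqb A' (n - d - a) then 1 else 0) * W1 * W2 *
      (if Nat.leb B (m - e) then (if Nat.eqb B' (m - e - B) then 1 else 0) else 0)))).
  2:{ intros a _.
      rewrite (sum_eq _ (fun b => (if Nat.eqb B b then 1 else 0) *
         ((if Nat.eqb A a then 1 else 0) * (if Nat.eqb A' (n - d - a) then 1 else 0) * W1 * W2 *
          (if Nat.eqb B' (m - e - b) then 1 else 0)))).
      2:{ intros b _. rewrite !if_and. ring. }
      rewrite sum_ind. destruct (Nat.leb B (m - e)); ring. }
  rewrite sum_ind.
  destruct (Nat.eqb_spec (d + A + A') n); destruct (Nat.eqb_spec (e + B + B') m);
  destruct (Nat.leb_spec d n); destruct (Nat.leb_spec e m); destruct (Nat.leb_spec A (n - d));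
  destruct (Nat.leb_spec B (m - e)); destruct (Nat.eqb_spec A' (n - d - A));
  destruct (Nat.eqb_spec B' (m - e - B)); simpl; try ring; lia.
Qed.

Lemma psi_bin p0 p1 p2 q0 q1 q2 ty n m l r :
  psi p0 p1 p2 q0 q1 q2 ty n m (Binary l r) =
  (if ty then p2 else q2) * (if andb (Nat.leb (dA ty) n) (Nat.leb (dB ty) m) then
    sum_f_R0 (fun a => sum_f_R0 (fun b =>
       psi p0 p1 p2 q0 q1 q2 true a b l *
       psi p0 p1 p2 q0 q1 q2 false (n - dA ty - a) (m - dB ty - b) r) (m - dB ty)) (n - dA ty)
   else 0).
Proof.
  unfold psi. simpl fathers. simpl gw_weight.
  destruct ty; simpl dA; simpl dB; cbv iota; apply split_core.
Qed.

Definition Bseq p0 p1 p2 q0 q1 q2 ty n m j :=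
  if andb (Nat.leb (dA ty) n) (Nat.leb (dB ty) m) then
    sum_f_R0 (fun a => sum_f_R0 (fun b => sum_f_R0 (fun i =>
      Fs p0 p1 p2 q0 q1 q2 true a b i *
      Fs p0 p1 p2 q0 q1 q2 false (n - dA ty - a) (m - dB ty - b) (j - i)) j) (m - dB ty)) (n - dA ty)
  else 0.

Lemma Fs_0 p0 p1 p2 q0 q1 q2 ty n m :
  Fs p0 p1 p2 q0 q1 q2 ty n m 0 = (if ty then p0 else q0) * (if andb (Nat.eqb n 0) (Nat.eqb m 0) then 1 else 0).
Proof.
  unfold Fs, psi. rewrite trees_0. simpl.
  destruct n, m; simpl; ring.
Qed.

Lemma sumR_scal_r {A} (f : A -> R) c l : sumR (map (fun x => f x * c) l) = sumR (map f l) * c.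
Proof. induction l; simpl; [ring|]. rewrite IHl. ring. Qed.

Lemma Fs_S p0 p1 p2 q0 q1 q2 ty n m k :
  Fs p0 p1 p2 q0 q1 q2 ty n m (S k) =
  (if ty then p1 else q1) * Fs p0 p1 p2 q0 q1 q2 ty n m k +
  match k with O => 0 | S j => (if ty then p2 else q2) * Bseq p0 p1 p2 q0 q1 q2 ty n m j end.
Proof.
  unfold Fs at 1. rewrite trees_S, map_app, sumR_app. f_equal.
  - rewrite map_map. unfold Fs. rewrite <- sumR_scal. apply sumR_map_ext. intros u _.
    unfold psi. simpl. destruct (_ && _)%bool; ring.
  - destruct k as [|j]; [reflexivity|].
    unfold binpart. cbv beta iota.
    rewrite sumR_flat_map.
    transitivity (sumR (map (fun i => (if ty then p2 else q2) *
       (if andb (Nat.leb (dA ty) n) (Nat.leb (dB ty) m) then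
         sum_f_R0 (fun a => sum_f_R0 (fun b =>
           Fs p0 p1 p2 q0 q1 q2 true a b i *
           Fs p0 p1 p2 q0 q1 q2 false (n - dA ty - a) (m - dB ty - b) (j - i)) (m - dB ty)) (n - dA ty)
        else 0)) (seq 0 (S j)))).
    + apply sumR_map_ext. intros i _.
      rewrite sumR_flat_map.
      rewrite (sumR_map_ext _ (fun l => (if ty then p2 else q2) *
        (if andb (Nat.leb (dA ty) n) (Nat.leb (dB ty) m) then
         sum_f_R0 (fun a => sum_f_R0 (fun b =>
           psi p0 p1 p2 q0 q1 q2 true a b l *
           Fs p0 p1 p2 q0 q1 q2 false (n - dA ty - a) (m - dB ty - b) (j - i)) (m - dB ty)) (n - dA ty)
        else 0))).
      2:{ intros l _. rewrite map_map.
          rewrite (sumR_map_ext _ _ _ (fun r _ => psi_bin p0 p1 p2 q0 q1 q2 ty n m l r)).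
          rewrite sumR_scal. f_equal. destruct (_ && _)%bool.
          2:{ clear. induction (trees_of_size (j - i)); simpl; auto. rewrite IHl. ring. }
          rewrite (sumR_sum (fun a r => sum_f_R0 (fun b =>
             psi p0 p1 p2 q0 q1 q2 true a b l *
             psi p0 p1 p2 q0 q1 q2 false (n - dA ty - a) (m - dB ty - b) r) (m - dB ty))).
          apply sum_eq. intros a _.
          rewrite (sumR_sum (fun b r =>
             psi p0 p1 p2 q0 q1 q2 true a b l *
             psi p0 p1 p2 q0 q1 q2 false (n - dA ty - a) (m - dB ty - b) r)).
          apply sum_eq. intros b _. unfold Fs. apply sumR_scal. }
      rewrite sumR_scal. f_equal. destruct (_ && _)%bool.
      2:{ clear. induction (trees_of_size i); simpl; auto. rewrite IHl. ring. }
      rewrite (sumR_sum (fun a l => sum_f_R0 (fun b =>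
           psi p0 p1 p2 q0 q1 q2 true a b l *
           Fs p0 p1 p2 q0 q1 q2 false (n - dA ty - a) (m - dB ty - b) (j - i)) (m - dB ty))).
      apply sum_eq. intros a _.
      rewrite (sumR_sum (fun b l =>
           psi p0 p1 p2 q0 q1 q2 true a b l *
           Fs p0 p1 p2 q0 q1 q2 false (n - dA ty - a) (m - dB ty - b) (j - i))).
      apply sum_eq. intros b _. unfold Fs at 1. apply sumR_scal_r.
    + rewrite sumR_scal. f_equal. unfold Bseq. destruct (_ && _)%bool.
      2:{ clear. induction (seq 0 (S j)); simpl; auto. rewrite IHl. ring. }
      rewrite (sumR_sum (fun a i => sum_f_R0 (fun b =>
           Fs p0 p1 p2 q0 q1 q2 true a b i *
           Fs p0 p1 p2 q0 q1 q2 false (n - dA ty - a) (m - dB ty - b) (j - i)) (m - dB ty))).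
      apply sum_eq. intros a _.
      rewrite (sumR_sum (fun b i =>
           Fs p0 p1 p2 q0 q1 q2 true a b i *
           Fs p0 p1 p2 q0 q1 q2 false (n - dA ty - a) (m - dB ty - b) (j - i))).
      apply sum_eq. intros b _. apply sumR_seq.
Qed.
From Coquelicot Require Import Hierarchy Series Lim_seq Rbar.

Lemma sum_nonneg f N : (forall i, (i <= N)%nat -> 0 <= f i) -> 0 <= sum_f_R0 f N.
Proof.
  intros H. induction N; simpl. apply H; lia.
  apply Rplus_le_le_0_compat. apply IHN; intros; apply H; lia. apply H; lia.
Qed.

Lemma is_series_zero : is_series (fun _ => 0) 0.
Proof.
  apply is_series_Reals. intros eps He. exists 0%nat. intros n _.
  rewrite sum_zero by reflexivity. unfold Rdist. rewrite Rminus_0_r, Rabs_R0. lra.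
Qed.

Lemma partial_le v V : (forall k, 0 <= v k) -> is_series v V -> forall K, sum_f_R0 v K <= V.
Proof.
  intros Hv HV K. apply is_series_Reals in HV.
  apply (growing_ineq (fun N => sum_f_R0 v N)); [|exact HV].
  intros N. simpl. pose proof (Hv (S N)). lra.
Qed.

Lemma series_rec (u v : nat -> R) (c r V : R) :
  0 <= r < 1 -> (forall k, 0 <= u k) -> (forall k, 0 <= v k) -> u 0%nat = c ->
  (forall k, u (S k) = r * u k + v k) -> is_series v V -> is_series u ((c + V) / (1 - r)).
Proof.
  intros Hr Hu Hv H0 HS HV.
  assert (HVp : 0 <= V) by (pose proof (partial_le v V Hv HV 0); pose proof (Hv 0%nat); simpl in *; lra).
  assert (Hsum : forall K, sum_f_R0 u (S K) = c + r * sum_f_R0 u K + sum_f_R0 v K).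
  { intros K. rewrite sum_first, H0. rewrite (sum_eq _ (fun k => r * u k + v k)) by (intros; apply HS).
    rewrite plus_sum. rewrite (sum_eq (fun k => r * u k) (fun k => u k * r)) by (intros; ring).
    rewrite <- scal_sum. ring. }
  assert (Hgrow : Un_growing (fun N => sum_f_R0 u N)).
  { intros N. simpl. pose proof (Hu (S N)). lra. }
  assert (Hbound : forall K, sum_f_R0 u K <= (c + V) / (1 - r)).
  { intros K. apply Rmult_le_reg_r with (1 - r); [lra|].
    unfold Rdiv. rewrite Rmult_assoc, Rinv_l by lra. rewrite Rmult_1_r.
    destruct K as [|K].
    - simpl. rewrite H0. assert (0 <= c) by (rewrite <- H0; apply Hu).
      assert (c * (1 - r) <= c) by nra. lra.
    - pose proof (Hgrow K) as G1. pose proof (partial_le v V Hv HV K) as G2.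
      assert (G3 : r * sum_f_R0 u K <= r * sum_f_R0 u (S K)) by (apply Rmult_le_compat_l; [lra|exact G1]).
      rewrite Hsum in G3 |- *. set (X := sum_f_R0 u K) in *. set (Vs := sum_f_R0 v K) in *.
      nra. }
  destruct (growing_cv _ Hgrow) as [L HL].
  { exists ((c + V) / (1 - r)). intros x [K ->]. apply Hbound. }
  assert (HuL : is_series u L) by (apply is_series_Reals; exact HL).
  assert (H1 : is_series (fun k => u (S k)) (L - c)).
  { apply (is_series_incr_1 (K:=R_AbsRing) (V:=R_NormedModule) u (L - c)).
    assert (X : L = L - c + u 0%nat) by (rewrite H0; ring).
    rewrite X in HuL. exact HuL. }
  assert (H2 : is_series (fun k => u (S k)) (r * L + V)).
  { apply (is_series_ext (K:=R_AbsRing) (V:=R_NormedModule)) with (fun k => plus (scal r (u k)) (v k)).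
    { intros k. rewrite HS. reflexivity. }
    apply (is_series_plus (K:=R_AbsRing) (V:=R_NormedModule) _ _ (scal r L) V); [|exact HV].
    apply (is_series_scal (K:=R_AbsRing) (V:=R_NormedModule)). exact HuL. }
  apply is_series_unique in H1. apply is_series_unique in H2. rewrite H1 in H2.
  replace ((c + V) / (1 - r)) with L; [exact HuL|].
  field_simplify_eq; [lra|lra].
Qed.

Lemma series_conv a b A B : (forall k, 0 <= a k) -> (forall k, 0 <= b k) ->
  is_series a A -> is_series b B ->
  is_series (fun j => sum_f_R0 (fun i => a i * b (j - i)%nat) j) (A * B).
Proof.
  intros Ha Hb HA HB. apply is_series_mult; auto.
  - apply ex_series_ext with a. intros; rewrite Rabs_right; auto; apply Rle_ge; auto.
    exists A; exact HA.
  - apply ex_series_ext with b. intros; rewrite Rabs_right; auto; apply Rle_ge; auto.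
    exists B; exact HB.
Qed.

Lemma series_sum (f : nat -> nat -> R) (l : nat -> R) N :
  (forall a, (a <= N)%nat -> is_series (f a) (l a)) ->
  is_series (fun k => sum_f_R0 (fun a => f a k) N) (sum_f_R0 l N).
Proof.
  induction N; intros H.
  - simpl. apply H. lia.
  - simpl. apply (is_series_plus (K:=R_AbsRing) (V:=R_NormedModule)).
    + apply IHN. intros; apply H; lia.
    + apply H; lia.
Qed.

Lemma is_series_eqlim (a : nat -> R) l l' : is_series a l -> l = l' -> is_series a l'.
Proof. intros H <-. exact H. Qed.

Lemma series_shift v V c : is_series v V ->
  is_series (fun k => match k with O => 0 | S j => c * v j end) (c * V).
Proof.
  intros HV. apply (is_series_decr_1 (K:=R_AbsRing) (V:=R_NormedModule)).
  apply (is_series_scal (K:=R_AbsRing) (V:=R_NormedModule)) with (c:=c) in HV.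
  apply (is_series_eqlim _ (scal c V)).
  - exact HV.
  - change (c * V = c * V + - 0). ring.
Qed.

Lemma gw_nonneg p0 p1 p2 q0 q1 q2 : 0 <= p0 -> 0 <= p1 -> 0 <= p2 -> 0 <= q0 -> 0 <= q1 -> 0 <= q2 ->
  forall t ty, 0 <= gw_weight p0 p1 p2 q0 q1 q2 ty t.
Proof.
  intros. revert ty. induction t; intros ty; simpl.
  - destruct ty; auto.
  - apply Rmult_le_pos; auto. destruct ty; auto.
  - apply Rmult_le_pos; auto. apply Rmult_le_pos; auto. destruct ty; auto.
Qed.

Lemma sumR_nonneg {A} (f : A -> R) l : (forall x, 0 <= f x) -> 0 <= sumR (map f l).
Proof. intros H. induction l; simpl. lra. pose proof (H a). lra. Qed.

Lemma Fs_nonneg p0 p1 p2 q0 q1 q2 : 0 <= p0 -> 0 <= p1 -> 0 <= p2 -> 0 <= q0 -> 0 <= q1 -> 0 <= q2 ->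
  forall ty n m k, 0 <= Fs p0 p1 p2 q0 q1 q2 ty n m k.
Proof.
  intros. unfold Fs. apply sumR_nonneg. intros t. unfold psi.
  destruct (_ && _)%bool; [apply gw_nonneg; auto|lra].
Qed.

Definition M1 (P Q : R) n m := P^(m+1) * (1-P)^n * Q^n * (1-Q)^m.
Definition M2 (P Q : R) n m := P^m * (1-P)^n * Q^(n+1) * (1-Q)^m.
Definition Kf (P Q : R) n m := P^(m+1) * (1-P)^n * Q^(n+1) * (1-Q)^m.

Lemma M12 P Q a b c d : M1 P Q a b * M2 P Q c d = Kf P Q (a+c) (b+d).
Proof. unfold M1, M2, Kf. rewrite !pow_add. simpl. ring. Qed.

Lemma Bseq_series p0 p1 p2 q0 q1 q2 P Q :
  0 <= p0 -> 0 <= p1 -> 0 <= p2 -> 0 <= q0 -> 0 <= q1 -> 0 <= q2 ->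
  forall ty n m,
  (forall a b, (a + b < n + m)%nat ->
     is_series (Fs p0 p1 p2 q0 q1 q2 true a b) (Gc 1 0 a b * M1 P Q a b) /\
     is_series (Fs p0 p1 p2 q0 q1 q2 false a b) (Gc 0 1 a b * M2 P Q a b)) ->
  is_series (Bseq p0 p1 p2 q0 q1 q2 ty n m)
    (if andb (Nat.leb (dA ty) n) (Nat.leb (dB ty) m)
     then Gc 1 1 (n - dA ty) (m - dB ty) * Kf P Q (n - dA ty) (m - dB ty) else 0).
Proof.
  intros H0 H1 H2 H3 H4 H5 ty n m IH.
  unfold Bseq. destruct (andb (Nat.leb (dA ty) n) (Nat.leb (dB ty) m)) eqn:Ec.
  2:{ exact is_series_zero. }
  apply Bool.andb_true_iff in Ec as [Ea Eb]. apply Nat.leb_le in Ea, Eb.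
  assert (Hd : (dA ty + dB ty = 1)%nat) by (destruct ty; reflexivity).
  set (n' := (n - dA ty)%nat). set (m' := (m - dB ty)%nat).
  eapply is_series_eqlim.
  - apply series_sum. intros a Ha. apply series_sum. intros b Hb.
    apply series_conv.
    + intros; apply Fs_nonneg; auto.
    + intros; apply Fs_nonneg; auto.
    + apply (IH a b). unfold n', m' in *. lia.
    + apply (IH (n' - a)%nat (m' - b)%nat). unfold n', m' in *. lia.
  - pose proof (Conv_Gc (2*n'+2*m'+1+0) 1 0 n' m' 0 1 ltac:(lia)) as HC. simpl in HC.
    rewrite <- HC.
    unfold Conv. symmetry. rewrite Rmult_comm, scal_sum. apply sum_eq. intros a Ha.
    rewrite Rmult_comm, scal_sum. apply sum_eq. intros b Hb.
    replace (Kf P Q n' m') with (M1 P Q a b * M2 P Q (n' - a) (m' - b)).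
    + ring.
    + rewrite M12. replace (a + (n' - a))%nat with n' by lia. replace (b + (m' - b))%nat with m' by lia.
      reflexivity.
Qed.

Lemma Gc10_0 : Gc 1 0 0 0 = 1. Proof. reflexivity. Qed.
Lemma Gc01_0 : Gc 0 1 0 0 = 1. Proof. reflexivity. Qed.
Lemma Gc10_0S m : Gc 1 0 0 (S m) = 0.
Proof. unfold Gc. simpl. unfold Rdiv. ring. Qed.
Lemma Gc01_S0 n : Gc 0 1 (S n) 0 = 0.
Proof. unfold Gc. rewrite !Nat.add_0_r. simpl. replace (n * 0)%nat with 0%nat by lia. simpl. unfold Rdiv. ring. Qed.
Lemma Gc10_S n m : Gc 1 0 (S n) m = Gc 1 1 n m.
Proof. rewrite Gc_rec1, Gc00. simpl. ring. Qed.
Lemma Gc01_S n m : Gc 0 1 n (S m) = Gc 1 1 n m.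
Proof. rewrite Gc_rec2, Gc00. replace (n + S m)%nat with (S (n+m)) by lia. simpl. ring. Qed.

Lemma main_ind p0 p1 p2 q0 q1 q2 P Q :
  0 < p0 -> 0 < p1 -> 0 < p2 -> 0 < q0 -> 0 < q1 -> 0 < q2 ->
  p0 + p1 + p2 = 1 -> q0 + q1 + q2 = 1 -> P = p0 / (p0 + p2) -> Q = q0 / (q0 + q2) ->
  forall K n m, (n + m <= K)%nat ->
     is_series (Fs p0 p1 p2 q0 q1 q2 true n m) (Gc 1 0 n m * M1 P Q n m) /\
     is_series (Fs p0 p1 p2 q0 q1 q2 false n m) (Gc 0 1 n m * M2 P Q n m).
Proof.
  intros Hp0 Hp1 Hp2 Hq0 Hq1 Hq2 Hp Hq HP HQ.
  assert (HPf : p2 / (1 - p1) = 1 - P) by (replace (1 - p1) with (p0 + p2) by lra; rewrite HP; field; lra).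
  assert (HQf : q2 / (1 - q1) = 1 - Q) by (replace (1 - q1) with (q0 + q2) by lra; rewrite HQ; field; lra).
  assert (HP0 : p0 / (1 - p1) = P) by (replace (1 - p1) with (p0 + p2) by lra; rewrite HP; field; lra).
  assert (HQ0 : q0 / (1 - q1) = Q) by (replace (1 - q1) with (q0 + q2) by lra; rewrite HQ; field; lra).
  induction K as [K IHK] using lt_wf_ind. intros n m HK.
  assert (IH : forall a b, (a + b < n + m)%nat ->
     is_series (Fs p0 p1 p2 q0 q1 q2 true a b) (Gc 1 0 a b * M1 P Q a b) /\
     is_series (Fs p0 p1 p2 q0 q1 q2 false a b) (Gc 0 1 a b * M2 P Q a b)).
  { intros a b Hab. apply (IHK (a + b)%nat); lia. }
  split.
  - pose proof (Bseq_series p0 p1 p2 q0 q1 q2 P Q ltac:(lra) ltac:(lra) ltac:(lra) ltac:(lra) ltac:(lra) ltac:(lra) true n m IH) as HB.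
    eapply is_series_eqlim.
    + apply (series_rec _ (fun k => match k with O => 0 | S j => p2 * Bseq p0 p1 p2 q0 q1 q2 true n m j end)
               (p0 * (if andb (Nat.eqb n 0) (Nat.eqb m 0) then 1 else 0)) p1).
      * lra.
      * intros; apply Fs_nonneg; lra.
      * intros [|j]; [lra|]. apply Rmult_le_pos; [lra|].
        unfold Bseq. destruct (_ && _)%bool; [|lra].
        apply sum_nonneg; intros; apply sum_nonneg; intros; apply sum_nonneg; intros.
        apply Rmult_le_pos; apply Fs_nonneg; lra.
      * rewrite Fs_0. reflexivity.
      * intros k. rewrite Fs_S. destruct k; reflexivity.
      * apply series_shift. exact HB.
    + match goal with |- ?a = ?b => change (@eq R a b) end. simpl dA; simpl dB. rewrite Nat.sub_0_r.
      destruct n as [|n''].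
      * simpl. destruct m as [|m'].
        -- rewrite Gc10_0. unfold M1. simpl. rewrite <- HP0. field. lra.
        -- rewrite Gc10_0S. simpl. unfold Rdiv. ring.
      * simpl andb. simpl Nat.eqb. rewrite Gc10_S. replace (S n'' - 1)%nat with n'' by lia.
        transitivity ((p2 / (1 - p1)) * (Gc 1 1 n'' m * Kf P Q n'' m)).
        { field. lra. }
        rewrite HPf. unfold M1, Kf. rewrite !Nat.add_1_r. simpl pow. ring.
  - pose proof (Bseq_series p0 p1 p2 q0 q1 q2 P Q ltac:(lra) ltac:(lra) ltac:(lra) ltac:(lra) ltac:(lra) ltac:(lra) false n m IH) as HB.
    eapply is_series_eqlim.
    + apply (series_rec _ (fun k => match k with O => 0 | S j => q2 * Bseq p0 p1 p2 q0 q1 q2 false n m j end)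
               (q0 * (if andb (Nat.eqb n 0) (Nat.eqb m 0) then 1 else 0)) q1).
      * lra.
      * intros; apply Fs_nonneg; lra.
      * intros [|j]; [lra|]. apply Rmult_le_pos; [lra|].
        unfold Bseq. destruct (_ && _)%bool; [|lra].
        apply sum_nonneg; intros; apply sum_nonneg; intros; apply sum_nonneg; intros.
        apply Rmult_le_pos; apply Fs_nonneg; lra.
      * rewrite Fs_0. reflexivity.
      * intros k. rewrite Fs_S. destruct k; reflexivity.
      * apply series_shift. exact HB.
    + match goal with |- ?a = ?b => change (@eq R a b) end. simpl dA; simpl dB. rewrite Nat.sub_0_r.
      destruct m as [|m''].
      * rewrite Nat.eqb_refl, Bool.andb_true_r. simpl Nat.leb. destruct n as [|n'].
        -- rewrite Gc01_0. unfold M2. simpl. rewrite <- HQ0. field. lra.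
        -- rewrite Gc01_S0. simpl. unfold Rdiv. ring.
      * rewrite Bool.andb_false_r. simpl Nat.leb. rewrite Bool.andb_true_r.
        rewrite Gc01_S. replace (S m'' - 1)%nat with m'' by lia.
        transitivity ((q2 / (1 - q1)) * (Gc 1 1 n m'' * Kf P Q n m'')).
        { field. lra. }
        rewrite HQf. unfold M2, Kf. rewrite !Nat.add_1_r. simpl pow. ring.
Qed.

Lemma Gc10_nar n' m : Gc 1 0 (S n') m = narayana (S n' + m) (m + 1).
Proof.
  unfold Gc, narayana.
  replace (S n' + m + 1)%nat with (S (S (n' + m))) by lia.
  replace (S n' + m + 0)%nat with (S (n' + m)) by lia.
  replace (S n' + m)%nat with (S (n' + m)) by lia.
  simpl Nat.eqb. simpl orb.
  replace (m + 1 - 1)%nat with m by lia.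
  replace (1 * 0 + 1 * S n' + 0 * m)%nat with (S n') by lia.
  unfold C.
  replace (S (S (n' + m)) - S n')%nat with (S m) by lia.
  replace (S (n' + m) - m)%nat with (S n') by lia.
  replace (S (n' + m) - (m + 1))%nat with n' by lia.
  replace (m + 1)%nat with (S m) by lia.
  rewrite (fact_S_INR (S (n'+m))), (fact_S_INR n').
  pose proof (fact_pos_INR (S (n'+m))). pose proof (fact_pos_INR n').
  pose proof (fact_pos_INR (S m)). pose proof (fact_pos_INR m).
  pose proof (pos_INR (n'+m)). pose proof (pos_INR n').
  rewrite !S_INR. field. repeat split; try assumption; lra.
Qed.

Theorem theorem4p1 (p0 p1 p2 q0 q1 q2 : R)
  (hp0 : 0 < p0 < 1) (hp1 : 0 < p1 < 1) (hp2 : 0 < p2 < 1)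
  (hq0 : 0 < q0 < 1) (hq1 : 0 < q1 < 1) (hq2 : 0 < q2 < 1)
  (hp : p0 + p1 + p2 = 1) (hq : q0 + q1 + q2 = 1)
  (* P(||tau|| < infinity) = 1 *)
  (hfin : infinite_sum (mass_size p0 p1 p2 q0 q1 q2 (fun _ => true)) 1)
  (n m : nat) (hn : (1 <= n)%nat) :
  let P := p0 / (p0 + p2) in
  let Q := q0 / (q0 + q2) in
  infinite_sum
    (mass_size p0 p1 p2 q0 q1 q2
       (fun t => andb (Nat.eqb (fathers true true t) n) (Nat.eqb (fathers false true t) m)))
    (narayana (n + m) (m + 1) * P ^ (m + 1) * (1 - P) ^ n * Q ^ n * (1 - Q) ^ m).
Proof.
  intros P Q.
  destruct (main_ind p0 p1 p2 q0 q1 q2 P Q ltac:(lra) ltac:(lra) ltac:(lra) ltac:(lra) ltac:(lra) ltac:(lra)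
    hp hq eq_refl eq_refl (n + m) n m (le_n _)) as [H _].
  apply is_series_Reals.
  apply (is_series_ext (K:=R_AbsRing) (V:=R_NormedModule)) with (Fs p0 p1 p2 q0 q1 q2 true n m).
  { intros k. unfold Fs, mass_size. rewrite sumR_filter. apply sumR_map_ext. intros t _.
    unfold psi. reflexivity. }
  eapply is_series_eqlim; [exact H|].
  destruct n as [|n']; [lia|].
  change (@eq R (Gc 1 0 (S n') m * M1 P Q (S n') m) (narayana (S n' + m) (m + 1) * P ^ (m + 1) * (1 - P) ^ S n' * Q ^ S n' * (1 - Q) ^ m)).
  rewrite Gc10_nar. unfold M1. ring.
Qed.
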